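(* Let $(\mathbf{H},m,\Delta)$ be a commutative and cocommutative set Hopf monoid, and equip each $\mathbf{H}[I]$ with the reassembly partial order $\le_r$. Then $\mathbf{H}$ is a poset Hopf monoid with respect to these orders, and it is self-adjoint with $\Delta\dashv m$, i.e. for every decomposition $I=S\sqcup T$ and all $x\in\mathbf{H}[I]$, $y\in\mathbf{H}[S]$, $z\in\mathbf{H}[T]$: $\Delta_{S,T}(x)\le_r(y,z)$ (product order) if and only if $x\le_r m_{S,T}(y,z)$.
   Context: A (connected) set species $\mathbf{H}$ assigns to each finite set $I$ a finite set $\mathbf{H}[I]$, with $\mathbf{H}[\emptyset]=\{1\}$, and to each bijection $f:I\to J$ a bijection $\mathbf{H}[f]$, functorially. A set Hopf monoid $(\mathbf{H},m,\Delta)$ has maps $m_{S,T}:\mathbf{H}[S]\times\mathbf{H}[T]\to\mathbf{H}[S\sqcup T]$ (natural in bijections, associative, with unit $1$) and $\Delta_{S,T}:\mathbf{H}[S\sqcup T]\to\mathbf{H}[S]\times\mathbf{H}[T]$ (natural, coassociative, counital: $\Delta_{I,\emptyset}(x)=(x,1)$, $\Delta_{\emptyset,I}(x)=(1,x)$), satisfying compatibility: for $I=S_1\sqcup S_2=T_1\sqcup T_2$, $A=S_1\cap T_1$, $B=S_1\cap T_2$, $C=S_2\cap T_1$, $D=S_2\cap T_2$, if $\Delta_{A,B}(x)=(x_A,x_B)$, $\Delta_{C,D}(y)=(y_C,y_D)$ then $\Delta_{T_1,T_2}(m_{S_1,S_2}(x,y))=(m_{A,C}(x_A,y_C),m_{B,D}(x_B,y_D))$.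 Iterated maps $m_{S_1,\dots,S_k}$, $\Delta_{S_1,\dots,S_k}$ are defined by (co)associativity. It is commutative if $m_{S,T}(x,y)=m_{T,S}(y,x)$ and cocommutative if $\Delta_{S,T}(x)=(y,z)\iff\Delta_{T,S}(x)=(z,y)$. The reassembly relation: $x\le_r y$ for $x,y\in\mathbf{H}[I]$ iff $y=m_{S_1,\dots,S_k}\circ\Delta_{S_1,\dots,S_k}(x)$ for some set partition $S_1\sqcup\dots\sqcup S_k=I$; for commutative and cocommutative $\mathbf{H}$ this is a partial order (Marberg). A poset Hopf monoid is a set Hopf monoid together with partial orders on each $\mathbf{H}[I]$ such that all relabelling maps $\mathbf{H}[f]$, all $m_{S,T}$ and all $\Delta_{S,T}$ are order-preserving (product orders on products). It is self-adjoint if the monoid $(\mathbf{H},m)$ and comonoid $(\mathbf{H},\Delta)$ form an adjoint pair, i.e. $m_{S,T}$ and $\Delta_{S,T}$ form a Galois connection for all $S,T$. *)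

(* Defs.v *)
From HB Require Import structures.
From mathcomp Require Import all_boot.
From mathcomp Require Import finmap.

Set Implicit Arguments.
Unset Strict Implicit.
Unset Printing Implicit Defensive.

Local Open Scope fset_scope.

(* Finite sets are represented as finite subsets of nat (an equivalent
   skeleton-free full subcategory of finite sets and bijections). *)
Notation fs := {fset nat}.

Definition tr (H : fs -> finType) (I J : fs) (e : I = J) (x : H I) : H J :=
  match e in _ = K return H K with erefl => x end.
Arguments tr {H I J} e x.

Definition bij_on (f : nat -> nat) (I J : fs) : Prop :=
  {in I &, injective f} /\ [fset f a | a in I] = J.

Record set_hopf_monoid := SetHopfMonoid {
  hcar :> fs -> finType;
  hrel : forall (I J : fs) (f : nat -> nat), bij_on f I J -> hcar I -> hcar J;
  hone : hcar fset0;
  hm : forall (S T : fs), fdisjoint S T -> hcar S -> hcar T -> hcar (S `|` T);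
  hd : forall (S T : fs), fdisjoint S T -> hcar (S `|` T) -> hcar S * hcar T;
  hone_uniq : forall x : hcar fset0, x = hone;
  hrel_ext : forall I J f g (p : bij_on f I J) (q : bij_on g I J),
    {in I, f =1 g} -> forall x, hrel p x = hrel q x;
  hrel_id : forall I (p : bij_on id I I) x, hrel p x = x;
  hrel_comp : forall I J K f g (p : bij_on f I J) (q : bij_on g J K)
    (r : bij_on (g \o f) I K) x, hrel q (hrel p x) = hrel r x;
  hm_nat : forall S T S' T' f (d : fdisjoint S T) (d' : fdisjoint S' T')
    (p : bij_on f (S `|` T) (S' `|` T')) (pS : bij_on f S S') (pT : bij_on f T T') x y,
    hrel p (hm d x y) = hm d' (hrel pS x) (hrel pT y);
  hd_nat : forall S T S' T' f (d : fdisjoint S T) (d' : fdisjoint S' T')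
    (p : bij_on f (S `|` T) (S' `|` T')) (pS : bij_on f S S') (pT : bij_on f T T') x,
    hd d' (hrel p x) = (hrel pS (hd d x).1, hrel pT (hd d x).2);
  hm_assoc : forall S T U (d1 : fdisjoint S (T `|` U)) (d2 : fdisjoint T U)
    (d3 : fdisjoint (S `|` T) U) (d4 : fdisjoint S T) x y z,
    tr (fsetUA S T U) (hm d1 x (hm d2 y z)) = hm d3 (hm d4 x y) z;
  hm_unitl : forall I (d : fdisjoint fset0 I) x, tr (fset0U I) (hm d hone x) = x;
  hm_unitr : forall I (d : fdisjoint I fset0) x, tr (fsetU0 I) (hm d x hone) = x;
  hd_coassoc : forall S T U (d1 : fdisjoint S (T `|` U)) (d2 : fdisjoint T U)
    (d3 : fdisjoint (S `|` T) U) (d4 : fdisjoint S T) x,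
    let r := hd d1 x in
    let l := hd d3 (tr (fsetUA S T U) x) in
    [/\ (hd d4 l.1).1 = r.1, (hd d4 l.1).2 = (hd d2 r.2).1 & l.2 = (hd d2 r.2).2];
  hd_counitr : forall I (d : fdisjoint I fset0) x,
    hd d (tr (esym (fsetU0 I)) x) = (x, hone);
  hd_counitl : forall I (d : fdisjoint fset0 I) x,
    hd d (tr (esym (fset0U I)) x) = (hone, x);
  (* compatibility: I = S1 + S2 = T1 + T2, A = S1 & T1, B = S1 & T2,
     C = S2 & T1, D = S2 & T2 *)
  hcompat : forall S1 S2 T1 T2 (dS : fdisjoint S1 S2) (dT : fdisjoint T1 T2)
    (e : S1 `|` S2 = T1 `|` T2)
    (eS1 : S1 = (S1 `&` T1) `|` (S1 `&` T2)) (eS2 : S2 = (S2 `&` T1) `|` (S2 `&` T2))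
    (eT1 : (S1 `&` T1) `|` (S2 `&` T1) = T1) (eT2 : (S1 `&` T2) `|` (S2 `&` T2) = T2)
    (dAB : fdisjoint (S1 `&` T1) (S1 `&` T2)) (dCD : fdisjoint (S2 `&` T1) (S2 `&` T2))
    (dAC : fdisjoint (S1 `&` T1) (S2 `&` T1)) (dBD : fdisjoint (S1 `&` T2) (S2 `&` T2))
    (x : hcar S1) (y : hcar S2),
    let px := hd dAB (tr eS1 x) in
    let py := hd dCD (tr eS2 y) in
    hd dT (tr e (hm dS x y)) = (tr eT1 (hm dAC px.1 py.1), tr eT2 (hm dBD px.2 py.2))
}.

Arguments hrel {s I J f} p x.
Arguments hm {s S T} d x y.
Arguments hd {s S T} d x.
Arguments hone {s}.

Definition commutative_hm (H : set_hopf_monoid) : Prop :=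
  forall S T (d : fdisjoint S T) (d' : fdisjoint T S) (x : H S) (y : H T),
    tr (fsetUC S T) (hm d x y) = hm d' y x.

Definition cocommutative_hm (H : set_hopf_monoid) : Prop :=
  forall S T (d : fdisjoint S T) (d' : fdisjoint T S) (x : H (S `|` T)),
    hd d' (tr (fsetUC S T) x) = ((hd d x).2, (hd d x).1).

(* ordered set partitions S_1, ..., S_k (blocks nonempty, pairwise disjoint) *)
Fixpoint bigU (l : seq fs) : fs :=
  if l is B :: l' then B `|` bigU l' else fset0.

Fixpoint is_setpart (l : seq fs) : bool :=
  if l is B :: l' then [&& B != fset0, fdisjoint B (bigU l') & is_setpart l']
  else true.

Lemma setpart_disj S l : is_setpart (S :: l) -> fdisjoint S (bigU l).
Proof. by case/and3P. Qed.

Lemma setpart_tail S l : is_setpart (S :: l) -> is_setpart l.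
Proof. by case/and3P. Qed.

(* m_{S1,...,Sk} o Delta_{S1,...,Sk}, iterated maps defined by right nesting *)
Fixpoint reas (H : set_hopf_monoid) (l : seq fs) :
  is_setpart l -> H (bigU l) -> H (bigU l) :=
  match l return is_setpart l -> H (bigU l) -> H (bigU l) with
  | [::] => fun _ x => x
  | B :: l' => fun pl x =>
      let d := setpart_disj pl in
      let p := hd d x in
      hm d p.1 (reas (setpart_tail pl) p.2)
  end.

Definition reassembly (H : set_hopf_monoid) (I : fs) (x y : H I) : Prop :=
  exists (l : seq fs) (pl : is_setpart l) (e : bigU l = I),
    y = tr e (reas pl (tr (esym e) x)).

Definition is_poset_hopf (H : set_hopf_monoid)
    (le : forall I : fs, H I -> H I -> Prop) : Prop :=
  [/\ (forall I, (forall x, le I x x) /\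
                 (forall x y, le I x y -> le I y x -> x = y) /\
                 (forall x y z, le I x y -> le I y z -> le I x z)),
      (forall I J f (p : bij_on f I J) x y, le I x y -> le J (hrel p x) (hrel p y)),
      (forall S T (d : fdisjoint S T) x x' y y',
          le S x x' -> le T y y' -> le (S `|` T) (hm d x y) (hm d x' y'))
    & (forall S T (d : fdisjoint S T) x x',
          le (S `|` T) x x' -> le S (hd d x).1 (hd d x').1 /\ le T (hd d x).2 (hd d x').2)].

Definition self_adjoint (H : set_hopf_monoid)
    (le : forall I : fs, H I -> H I -> Prop) : Prop :=
  forall S T (d : fdisjoint S T) (x : H (S `|` T)) (y : H S) (z : H T),
    (le S (hd d x).1 y /\ le T (hd d x).2 z) <-> le (S `|` T) x (hm d y z).

Arguments reassembly : clear implicits.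
Arguments is_poset_hopf : clear implicits.
Arguments self_adjoint : clear implicits.

(* Main.v *)
Require Import Defs.
From HB Require Import structures.
From mathcomp Require Import all_boot.
From mathcomp Require Import finmap.
From Stdlib Require Import Eqdep_dec ClassicalEpsilon.

Set Implicit Arguments.
Unset Strict Implicit.
Unset Printing Implicit Defensive.
Local Open Scope fset_scope.

Ltac fsol := rewrite ?inE; repeat match goal with |- context [?a \in ?X] => case: (a \in X) end;
  rewrite /is_true /=; intuition congruence.

Section Main.
Variable H : set_hopf_monoid.
Hypothesis Hcom : commutative_hm H.
Hypothesis Hcoc : cocommutative_hm H.

Definition E := {I : fs & H I}.
Definition mk (I : fs) (x : H I) : E := existT (fun I => H I) I x.

Lemma mk_tr I J (e : I = J) (x : H I) : mk (tr e x) = mk x.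
Proof. by case: J / e. Qed.

Lemma mk_inj I (x y : H I) : mk x = mk y -> x = y.
Proof. apply: inj_pair2_eq_dec => a b; exact: (decP eqP). Qed.

Lemma tr_comp I J K (e1 : I = J) (e2 : J = K) (x : H I) : tr e2 (tr e1 x) = tr (etrans e1 e2) x.
Proof. by case: K / e2; case: J / e1. Qed.

Lemma hdT I S T S' T' (x : H I) (e1 : I = S `|` T) (e2 : I = S' `|` T')
  (d1 : fdisjoint S T) (d2 : fdisjoint S' T') (eS : S = S') (eT : T = T') :
  mk (hd d2 (tr e2 x)).1 = mk (hd d1 (tr e1 x)).1 /\ mk (hd d2 (tr e2 x)).2 = mk (hd d1 (tr e1 x)).2.
Proof. subst S' T'. by rewrite (eq_irrelevance e1 e2) (bool_irrelevance d1 d2). Qed.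

Lemma resE_e (I A : fs) : I = (I `&` A) `|` (I `\` A).
Proof. apply/fsetP => a; fsol. Qed.

Lemma resE_d (I A : fs) : fdisjoint (I `&` A) (I `\` A).
Proof. apply/fdisjointP => a; fsol. Qed.

Definition res (A : fs) (u : E) : E :=
  let: existT K x := u in mk (hd (resE_d K A) (tr (resE_e K A) x)).1.

Arguments res : simpl never.

Lemma resP (I S T A : fs) (x : H I) (d : fdisjoint S T) (e : I = S `|` T) :
  I `&` A = S -> res A (mk x) = mk (hd d (tr e x)).1.
Proof.
move=> eS; have eT : I `\` A = T.
  apply/fsetP => a; move: (fdisjointP d a) (congr1 (fun X => a \in X) e) (congr1 (fun X => a \in X) eS); fsol.
by case: (hdT x e (resE_e I A) d (resE_d I A) (esym eS) (esym eT)).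
Qed.

Lemma resP2 (I S T A : fs) (x : H I) (d : fdisjoint S T) (e : I = S `|` T) :
  I `&` A = T -> res A (mk x) = mk (hd d (tr e x)).2.
Proof.
move=> eT; have d' : fdisjoint T S by rewrite fdisjoint_sym.
have := Hcoc d d' (tr e x); rewrite tr_comp => h.
by rewrite (resP _ d' (etrans e (fsetUC S T)) eT) h.
Qed.

Definition decb (b : bool) : {b} + {~~ b} :=
  if b as c return {c} + {~~ c} then left isT else right isT.

Definition mulE (u v : E) : option E :=
  let: existT K1 x := u in let: existT K2 y := v in
  match decb (fdisjoint K1 K2) with left d => Some (mk (hm d x y)) | right _ => None end.

Arguments mulE : simpl never.

Variant mul_spec S T (x : H S) (y : H T) : option E -> Type :=
 | MulD (d : fdisjoint S T) : mul_spec x y (Some (mk (hm d x y)))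
 | MulN of ~~ fdisjoint S T : mul_spec x y None.

Lemma mulEP S T (x : H S) (y : H T) : mul_spec x y (mulE (mk x) (mk y)).
Proof. by rewrite /mulE /=; case: decb => [d|nd]; constructor. Qed.

Lemma mulE_d S T (d : fdisjoint S T) (x : H S) (y : H T) : mulE (mk x) (mk y) = Some (mk (hm d x y)).
Proof. case: mulEP => [d'|]; last by rewrite d. by rewrite (bool_irrelevance d' d). Qed.


Lemma Eind (P : E -> Prop) : (forall K (x : H K), P (mk x)) -> forall u, P u.
Proof. by move=> h [K x]; apply: h. Qed.

Definition one : E := mk (@hone H).

Lemma mk0 (x : H fset0) : mk x = one.
Proof. by rewrite (hone_uniq x). Qed.

Lemma tag0 (u : E) : projT1 u = fset0 -> u = one.
Proof. by elim/Eind: u => K x /= e; subst K; apply: mk0. Qed.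

Definition mulO (a b : option E) : option E :=
  match a, b with Some u, Some v => mulE u v | _, _ => None end.

Ltac fin := repeat match goal with
  | h : is_true (fdisjoint _ _) |- _ => rewrite h
  | h : is_true (~~ fdisjoint _ _) |- _ => rewrite (negbTE h) end;
  repeat match goal with |- context [fdisjoint ?A ?B] => case: (fdisjoint A B) end; by [].

Lemma mulOA : associative mulO.
Proof.
case=> [u|] [v|] [w|] //=; last by case: (mulE u v).
elim/Eind: u => S x; elim/Eind: v => T y; elim/Eind: w => U z.
have := fdisjointUX S T U; have := fdisjointXU S T U.
case: (mulEP x y) => [d4|n4]; case: (mulEP y z) => [d2|n2] /=; try fin.
- case: (mulEP (hm d4 x y) z) => [d3|n3]; case: (mulEP x (hm d2 y z)) => [d1|n1]; try fin.
  move=> _ _; by rewrite -(hm_assoc d1 d2 d3 d4) mk_tr.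
- by case: (mulEP (hm d4 x y) z) => [d3|n3]; fin.
- by case: (mulEP x (hm d2 y z)) => [d1|n1]; fin.
Qed.

Lemma mulOC : commutative mulO.
Proof.
case=> [u|] [v|] //=; elim/Eind: u => S x; elim/Eind: v => T y.
have := fdisjoint_sym S T.
case: (mulEP x y) => [d|]; case: (mulEP y x) => [d'|]; try fin.
by rewrite -(Hcom d d') mk_tr.
Qed.

Lemma mul1O : left_id (Some one) mulO.
Proof.
case=> [u|] //=; elim/Eind: u => K x /=.
by rewrite /one (mulE_d (fdisjoint0X K)) -[LHS in Some LHS](mk_tr (fset0U K)) hm_unitl.
Qed.

HB.instance Definition _ := Monoid.isComLaw.Build (option E) (Some one) mulO mulOA mulOC mul1O.


Lemma tag_res A u : projT1 (res A u) = projT1 u `&` A.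
Proof. by elim/Eind: u. Qed.

Lemma res_one A : res A one = one.
Proof. by apply: tag0; rewrite tag_res /= fset0I. Qed.

Lemma res_sub A u : projT1 u `<=` A -> res A u = u.
Proof.
elim/Eind: u => K x /= sKA.
rewrite (resP x (fdisjointX0 K) (esym (fsetU0 K))); last first.
  by apply/fsetP => a; move: (fsubsetP sKA a); fsol.
by rewrite hd_counitr.
Qed.

Lemma res_dis A u : fdisjoint (projT1 u) A -> res A u = one.
Proof.
move=> d; apply: tag0; rewrite tag_res; apply/fsetP => a; move: (fdisjointP d a); fsol.
Qed.

Lemma res_eq A B u : projT1 u `&` A = projT1 u `&` B -> res A u = res B u.
Proof.
elim/Eind: u => K x /= e.
by rewrite [RHS](resP x (resE_d K A) (resE_e K A) (esym e)).
Qed.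

Lemma res_res A B u : res A (res B u) = res (B `&` A) u.
Proof.
elim/Eind: u => K x.
pose P := K `&` B `&` A; pose Q := K `&` B `\` A; pose R := K `\` B.
have e : K = P `|` (Q `|` R) by apply/fsetP => a; rewrite /P /Q /R; fsol.
have d1 : fdisjoint P (Q `|` R) by apply/fdisjointP => a; rewrite /P /Q /R; fsol.
have d2 : fdisjoint Q R by apply/fdisjointP => a; rewrite /Q /R; fsol.
have d3 : fdisjoint (P `|` Q) R by apply/fdisjointP => a; rewrite /P /Q /R; fsol.
have d4 : fdisjoint P Q by apply/fdisjointP => a; rewrite /P /Q; fsol.
have [c1 _ _] := hd_coassoc d1 d2 d3 d4 (tr e x).
rewrite (resP x d3 (etrans e (fsetUA P Q R))); last by apply/fsetP => a; rewrite /P /Q; fsol.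
rewrite (resP _ d4 (erefl (P `|` Q))); last by apply/fsetP => a; rewrite /P /Q; fsol.
rewrite (resP x d1 e); last by apply/fsetP => a; rewrite /P; fsol.
by rewrite -c1 tr_comp.
Qed.

Lemma res_mul A S1 S2 (d : fdisjoint S1 S2) (x : H S1) (y : H S2) :
  Some (res A (mk (hm d x y))) = mulO (Some (res A (mk x))) (Some (res A (mk y))).
Proof.
pose I := S1 `|` S2; pose T1 := I `&` A; pose T2 := I `\` A.
have eS1 : S1 = (S1 `&` T1) `|` (S1 `&` T2) by apply/fsetP => a; rewrite /T1 /T2 /I; fsol.
have eS2 : S2 = (S2 `&` T1) `|` (S2 `&` T2) by apply/fsetP => a; rewrite /T1 /T2 /I; fsol.
have eT1 : (S1 `&` T1) `|` (S2 `&` T1) = T1 by apply/fsetP => a; rewrite /T1 /T2 /I; fsol.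
have eT2 : (S1 `&` T2) `|` (S2 `&` T2) = T2 by apply/fsetP => a; rewrite /T1 /T2 /I; fsol.
have dAB : fdisjoint (S1 `&` T1) (S1 `&` T2) by apply/fdisjointP => a; rewrite /T1 /T2 /I; fsol.
have dCD : fdisjoint (S2 `&` T1) (S2 `&` T2) by apply/fdisjointP => a; rewrite /T1 /T2 /I; fsol.
have dAC : fdisjoint (S1 `&` T1) (S2 `&` T1) by apply/fdisjointP => a; move: (fdisjointP d a); rewrite /T1 /T2 /I; fsol.
have dBD : fdisjoint (S1 `&` T2) (S2 `&` T2) by apply/fdisjointP => a; move: (fdisjointP d a); rewrite /T1 /T2 /I; fsol.
have := hcompat d (resE_d I A) (resE_e I A) eS1 eS2 eT1 eT2 dAB dCD dAC dBD x y.
rewrite /= => hc.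
have -> : res A (mk (hm d x y)) = mk (hd (resE_d I A) (tr (resE_e I A) (hm d x y))).1 by [].
rewrite hc /= mk_tr.
rewrite (resP x dAB eS1); last by apply/fsetP => a; rewrite /T1 /I; fsol.
rewrite (resP y dCD eS2); last by apply/fsetP => a; rewrite /T1 /I; fsol.
by rewrite /= mulE_d.
Qed.


Lemma mulO1 : right_id (Some one) mulO.
Proof. by move=> a; rewrite mulOC mul1O. Qed.

Lemma mulO_some a b w : mulO a b = Some w ->
  exists S1 S2 (d : fdisjoint S1 S2) (x : H S1) (y : H S2),
    [/\ a = Some (mk x), b = Some (mk y) & w = mk (hm d x y)].
Proof.
case: a => [a|] //; case: b => [b|] //.
elim/Eind: a => S1 x; elim/Eind: b => S2 y /=.
case: mulEP => [d|] // [<-]; by exists S1, S2, d, x, y.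
Qed.

Lemma res_big (X : Type) (s : seq X) (F : X -> option E) A w :
  \big[mulO/Some one]_(i <- s) F i = Some w ->
  Some (res A w) = \big[mulO/Some one]_(i <- s) omap (res A) (F i).
Proof.
elim: s w => [|i s IH] w.
  by rewrite !big_nil => -[<-]; rewrite res_one.
rewrite !big_cons => /mulO_some [S1 [S2 [d [x [y [-> e ->]]]]]].
by rewrite res_mul -(IH _ e).
Qed.

Definition mu (l : seq fs) (u : E) : option E := \big[mulO/Some one]_(B <- l) Some (res B u).

Lemma mu_res l u v A : Some v = mu l u -> Some (res A v) = mu l (res A u).
Proof.
rewrite /mu => /esym /(res_big A) ->; apply: eq_bigr => B _ /=.
by rewrite !res_res (fsetIC B A).
Qed.

Lemma mu_comp l1 l2 u v : Some v = mu l1 u ->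
  mu l2 v = \big[mulO/Some one]_(C <- l2) \big[mulO/Some one]_(B <- l1) Some (res (B `&` C) u).
Proof.
move=> e; rewrite /mu; apply: eq_bigr => C _.
by rewrite (mu_res C e) /mu; apply: eq_bigr => B _; rewrite res_res fsetIC.
Qed.

Lemma mu_swap l1 l2 u v w : Some v = mu l1 u -> Some w = mu l2 u -> mu l2 v = mu l1 w.
Proof.
move=> e1 e2; rewrite (mu_comp l2 e1) (mu_comp l1 e2) exchange_big.
by apply: eq_bigr => B _; apply: eq_bigr => C _; rewrite fsetIC.
Qed.

Definition good (K : fs) (l : seq fs) := forall a, a \in K -> count (fun B : fs => a \in B) l = 1.

Lemma mem_bigU a l : (a \in Defs.bigU l) = has (fun B : fs => a \in B) l.
Proof. by elim: l => [|B l IH] /=; rewrite ?inE // IH. Qed.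

Lemma mu_idem K l u v : projT1 u = K -> good K l -> Some v = mu l u -> mu l v = Some v.
Proof.
move=> tu g e; rewrite (mu_comp l e) e /mu; apply: eq_big_seq => C Cl.
rewrite (perm_big _ (perm_to_rem Cl)) big_cons big1_seq ?Monoid.mulm1.
  by congr Some; apply: res_eq; rewrite fsetIid.
move=> B /andP [_ BC]; apply/congr1/res_dis; apply/fdisjointP => a; rewrite tu => aK.
rewrite !inE; apply/negP => /andP [aB aC].
have := g a aK; rewrite (permP (perm_to_rem Cl)) /= aC add1n => -[] /eqP.
by rewrite -leqn0 leqNgt -has_count => /negP; apply; apply/hasP; exists B.
Qed.


Lemma good_cover K l : good K l -> K `&` Defs.bigU l = K.
Proof.
move=> g; apply/fsetP => a; rewrite inE mem_bigU has_count.
by case aK: (a \in K) => //=; rewrite g.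
Qed.

Lemma mu_some K l u : projT1 u = K ->
  (forall a, a \in K -> count (fun B : fs => a \in B) l <= 1) ->
  exists w, mu l u = Some w /\ projT1 w = K `&` Defs.bigU l.
Proof.
move=> tu; elim: l => [|B l IH] c.
  by exists one; rewrite /mu big_nil /= fsetI0.
have c' : forall a, a \in K -> count (fun B : fs => a \in B) l <= 1.
  by move=> a aK; apply: leq_trans (c a aK); rewrite /= leq_addl.
have [w [ew tw]] := IH c'.
rewrite /mu big_cons -/(mu l u) ew.
move: (res B u) (tag_res B u) => r; elim/Eind: r => S1 x /= tS1.
elim/Eind: w ew tw => S2 y _ /= tS2.
case: mulEP => [d|nd].
  by exists (mk (hm d x y)); split=> //=; rewrite tS1 tS2 tu /=; apply/fsetP=> a; fsol.
exfalso; move: nd => /negP; apply; apply/fdisjointP => a; rewrite tS1 tS2 tu !inE.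
case/andP => aK aB; apply/negP => /andP [_ aU].
have := c a aK; rewrite /= aB add1n ltnS leqn0 => /eqP c0.
by move: aU; rewrite mem_bigU has_count c0.
Qed.

Lemma count_Ir a S l : count (fun X : fs => a \in X) [seq B `&` S | B <- l] =
  (a \in S) * count (fun B : fs => a \in B) l.
Proof.
rewrite count_map; case aS: (a \in S).
  by rewrite mul1n; apply: eq_count => B; rewrite /= inE aS andbT.
by rewrite mul0n -(count_pred0 l); apply: eq_count => B; rewrite /= inE aS andbF.
Qed.

Lemma count_Il a S l : count (fun X : fs => a \in X) [seq S `&` B | B <- l] =
  (a \in S) * count (fun B : fs => a \in B) l.
Proof.
rewrite count_map; case aS: (a \in S).
  by rewrite mul1n; apply: eq_count => B; rewrite /= inE aS.
by rewrite mul0n -(count_pred0 l); apply: eq_count => B; rewrite /= inE aS.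
Qed.

Lemma count_meet a l1 l2 :
  count (fun X : fs => a \in X) [seq B `&` C | B <- l1, C <- l2] =
  count (fun B : fs => a \in B) l1 * count (fun B : fs => a \in B) l2.
Proof.
elim: l1 => [|B l1 IH] //=; rewrite count_cat IH.
by rewrite (count_Il a B l2) mulnDl.
Qed.

Definition R K (x y : H K) := exists l, good K l /\ Some (mk y) = mu l (mk x).
Arguments R : clear implicits.

Lemma R_refl K (x : H K) : R K x x.
Proof.
exists [:: K]; split; first by move=> a aK /=; rewrite aK.
by rewrite /mu big_seq1 res_sub //= fsubset_refl.
Qed.

Lemma R_trans K (x y z : H K) : R K x y -> R K y z -> R K x z.
Proof.
move=> [l1 [g1 e1]] [l2 [g2 e2]].
exists [seq B `&` C | B <- l1, C <- l2]; split.
  by move=> a aK; rewrite count_meet g1 ?g2.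
rewrite e2 (mu_comp l2 e1) exchange_big /mu big_allpairs_dep.
by apply: eq_bigr => B _; apply: eq_bigr => C _.
Qed.

Lemma R_anti K (x y : H K) : R K x y -> R K y x -> x = y.
Proof.
move=> [l1 [g1 e1]] [l2 [g2 e2]].
have [w [ew tw]] := @mu_some K l2 (mk x) erefl (fun a aK => eq_leq (g2 a aK)).
rewrite good_cover // in tw.
have e3 : Some (mk x) = mu l1 w by rewrite e2 (mu_swap e1 (esym ew)).
have := mu_idem tw g1 e3; rewrite -e1 => -[] /mk_inj.
by [].
Qed.

Lemma res_hd1 S T (d : fdisjoint S T) (x : H (S `|` T)) : res S (mk x) = mk (hd d x).1.
Proof. by rewrite (resP x d (erefl _)) // fsetUKC. Qed.

Lemma res_hd2 S T (d : fdisjoint S T) (x : H (S `|` T)) : res T (mk x) = mk (hd d x).2.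
Proof. by rewrite (resP2 x d (erefl _)) // fsetUK. Qed.

Lemma res_hm1 S T (d : fdisjoint S T) (x : H S) (y : H T) : res S (mk (hm d x y)) = mk x.
Proof.
have := res_mul S d x y; rewrite (@res_sub S (mk x)) ?fsubset_refl // (@res_dis S (mk y)); last by rewrite fdisjoint_sym.
by rewrite mulO1 => -[].
Qed.

Lemma res_hm2 S T (d : fdisjoint S T) (x : H S) (y : H T) : res T (mk (hm d x y)) = mk y.
Proof.
have := res_mul T d x y; rewrite (@res_sub T (mk y)) ?fsubset_refl // (@res_dis T (mk x)) //.
by rewrite mul1O => -[].
Qed.

Lemma mu_split S T l1 l2 u :
  mu ([seq B `&` S | B <- l1] ++ [seq C `&` T | C <- l2]) u =
  mulO (mu l1 (res S u)) (mu l2 (res T u)).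
Proof.
have h1 : \big[mulO/Some one]_(B <- l1) Some (res (B `&` S) u) = mu l1 (res S u).
  by apply: eq_bigr => B _; rewrite res_res fsetIC.
have h2 : \big[mulO/Some one]_(B <- l2) Some (res (B `&` T) u) = mu l2 (res T u).
  by apply: eq_bigr => B _; rewrite res_res fsetIC.
by rewrite {1}/mu big_cat !big_map h1 h2.
Qed.

Lemma good_split S T l1 l2 : fdisjoint S T -> good S l1 -> good T l2 ->
  good (S `|` T) ([seq B `&` S | B <- l1] ++ [seq C `&` T | C <- l2]).
Proof.
move=> d g1 g2 a; rewrite count_cat !count_Ir inE; case aS: (a \in S) => /=.
  by rewrite (negbTE (fdisjointP d a aS)) g1.
by move=> aT; rewrite aT g2.
Qed.

Lemma good_sub K K' l : K' `<=` K -> good K l -> good K' l.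
Proof. by move=> s g a aK; apply: g; apply: (fsubsetP s). Qed.

Lemma R_hm S T (d : fdisjoint S T) x x' y y' :
  R S x x' -> R T y y' -> R (S `|` T) (hm d x y) (hm d x' y').
Proof.
move=> [l1 [g1 e1]] [l2 [g2 e2]].
exists ([seq B `&` S | B <- l1] ++ [seq C `&` T | C <- l2]); split; first exact: good_split.
by rewrite mu_split res_hm1 res_hm2 -e1 -e2 /= mulE_d.
Qed.

Lemma R_hd S T (d : fdisjoint S T) x x' :
  R (S `|` T) x x' -> R S (hd d x).1 (hd d x').1 /\ R T (hd d x).2 (hd d x').2.
Proof.
move=> [l [g e]]; split; exists l; (split; first by apply: good_sub g; rewrite ?fsubsetUl ?fsubsetUr).
  by rewrite -res_hd1 -res_hd1 (mu_res S e).
by rewrite -res_hd2 -res_hd2 (mu_res T e).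
Qed.

Lemma R_adj S T (d : fdisjoint S T) x y z :
  (R S (hd d x).1 y /\ R T (hd d x).2 z) <-> R (S `|` T) x (hm d y z).
Proof.
split.
  move=> [[l1 [g1 e1]] [l2 [g2 e2]]].
  exists ([seq B `&` S | B <- l1] ++ [seq C `&` T | C <- l2]); split; first exact: good_split.
  by rewrite mu_split (res_hd1 d) (res_hd2 d) -e1 -e2 /= mulE_d.
move=> [l [g e]]; split; exists l; (split; first by apply: good_sub g; rewrite ?fsubsetUl ?fsubsetUr).
  by rewrite -res_hd1 -(res_hm1 d y z) (mu_res S e).
by rewrite -res_hd2 -(res_hm2 d y z) (mu_res T e).
Qed.


Definition relE (f : nat -> nat) (u : E) : E :=
  match excluded_middle_informative (bij_on f (projT1 u) [fset f a | a in projT1 u]) with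
  | left p => mk (hrel p (projT2 u)) | right _ => u end.

Lemma hrel_irr K J J' f (p : bij_on f K J) (p' : bij_on f K J') (x : H K) :
  mk (hrel p x) = mk (hrel p' x).
Proof.
have eJ : J = J' by rewrite -(proj2 p) (proj2 p').
subst J'; by rewrite (hrel_ext p p' (fun _ _ => erefl)).
Qed.

Lemma hrel_tr2 K K' J J' f (e1 : K = K') (e2 : J = J') (p : bij_on f K J) (q : bij_on f K' J') (x : H K) :
  hrel q (tr e1 x) = tr e2 (hrel p x).
Proof. subst K' J'; exact: hrel_ext. Qed.

Lemma relE_mk K J f (p : bij_on f K J) (x : H K) : relE f (mk x) = mk (hrel p x).
Proof.
rewrite /relE /=; case: excluded_middle_informative => [p'|np]; first exact: hrel_irr.
by exfalso; apply: np; split; [exact: (proj1 p) | ].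
Qed.

Lemma bij_sub (f : nat -> nat) (K K' : fs) : {in K &, injective f} -> K' `<=` K -> bij_on f K' [fset f a | a in K'].
Proof. move=> inj s; split => // a b aK bK; apply: inj; exact: (fsubsetP s). Qed.

Lemma img_dis (f : nat -> nat) (K S T : fs) : {in K &, injective f} -> S `<=` K -> T `<=` K -> fdisjoint S T ->
  fdisjoint [fset f a | a in S] [fset f a | a in T].
Proof.
move=> inj sS sT d; apply/fdisjointP => b /imfsetP [a aS ->]; apply/negP => /imfsetP [a' aT].
move/(inj _ _ (fsubsetP sS _ aS) (fsubsetP sT _ aT)) => e; subst a'.
by move: (fdisjointP d a aS); rewrite aT.
Qed.

Lemma img_U (f : nat -> nat) (S T : fs) : [fset f a | a in S `|` T] = [fset f a | a in S] `|` [fset f a | a in T].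
Proof.
apply/fsetP => b; rewrite inE; apply/imfsetP/orP.
  by case=> a; rewrite inE => /orP [aS|aT] ->; [left|right]; apply/imfsetP; exists a.
by case=> /imfsetP [a aX ->]; exists a; rewrite // inE aX ?orbT.
Qed.

Lemma img_S (f : nat -> nat) (S T : fs) : S `<=` T -> [fset f a | a in S] `<=` [fset f a | a in T].
Proof.
move=> s; apply/fsubsetP => b /imfsetP [a aS ->]; apply/imfsetP; exists a => //.
exact: (fsubsetP s).
Qed.

Lemma rel_tag (f : nat -> nat) u : {in projT1 u &, injective f} -> projT1 (relE f u) = [fset f a | a in projT1 u].
Proof. elim/Eind: u => K x /= inj; by rewrite (relE_mk (bij_sub inj (fsubset_refl K))). Qed.

Lemma rel_res (f : nat -> nat) A u : {in projT1 u &, injective f} ->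
  relE f (res A u) = res [fset f a | a in projT1 u `&` A] (relE f u).
Proof.
elim/Eind: u => K x /= inj.
pose S := K `&` A; pose T := K `\` A.
have sS : S `<=` K by rewrite fsubsetIl.
have sT : T `<=` K by rewrite fsubsetDl.
have pK := bij_sub inj (fsubset_refl K).
rewrite (relE_mk pK).
have d : fdisjoint S T := resE_d K A.
have dS := img_dis inj sS sT d.
have e' : [fset f a | a in K] = [fset f a | a in S] `|` [fset f a | a in T].
  by rewrite -img_U -resE_e.
rewrite (resP (hrel pK x) dS e'); last by apply/fsetIidPr; apply: img_S.
have -> : res A (mk x) = mk (hd d (tr (resE_e K A) x)).1 by rewrite /res /= (bool_irrelevance (resE_d K A) d).
have pST : bij_on f (S `|` T) ([fset f a | a in S] `|` [fset f a | a in T]).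
  by split; [move=> a b aK bK; apply: inj; rewrite (resE_e K A) | rewrite img_U].
rewrite -(hrel_tr2 (resE_e K A) e' pK pST).
rewrite (hd_nat d dS pST (bij_sub inj sS) (bij_sub inj sT)) /=.
by rewrite (relE_mk (bij_sub inj sS)).
Qed.

Lemma rel_mul (f : nat -> nat) S1 S2 (d : fdisjoint S1 S2) (x : H S1) (y : H S2) :
  {in S1 `|` S2 &, injective f} ->
  Some (relE f (mk (hm d x y))) = mulO (Some (relE f (mk x))) (Some (relE f (mk y))).
Proof.
move=> inj.
have s1 : S1 `<=` S1 `|` S2 by rewrite fsubsetUl.
have s2 : S2 `<=` S1 `|` S2 by rewrite fsubsetUr.
have p : bij_on f (S1 `|` S2) ([fset f a | a in S1] `|` [fset f a | a in S2]).
  by split => //; rewrite img_U.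
have d' := img_dis inj s1 s2 d.
rewrite (relE_mk p) (relE_mk (bij_sub inj s1)) (relE_mk (bij_sub inj s2)).
by rewrite (hm_nat d d' p (bij_sub inj s1) (bij_sub inj s2)) /= mulE_d.
Qed.

Lemma rel_big (X : Type) (s : seq X) (F : X -> option E) (f : nat -> nat) w :
  \big[mulO/Some one]_(i <- s) F i = Some w -> {in projT1 w &, injective f} ->
  Some (relE f w) = \big[mulO/Some one]_(i <- s) omap (relE f) (F i).
Proof.
elim: s w => [|i s IH] w.
  rewrite !big_nil => -[<-] inj; congr Some; apply: tag0; rewrite rel_tag //=.
  by apply/fsetP => b; rewrite inE; apply/negP => /imfsetP [a].
rewrite !big_cons => /mulO_some [S1 [S2 [d [x [y [-> e ->]]]]]] /= inj.
rewrite rel_mul // -(IH _ e) //.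
by move=> a b aS bS; apply: inj; rewrite inE ?aS ?bS ?orbT.
Qed.

Lemma R_rel I J f (p : bij_on f I J) (x y : H I) : R I x y -> R J (hrel p x) (hrel p y).
Proof.
move=> [l [g e]]; have inj := proj1 p.
exists [seq [fset f a | a in I `&` B] | B <- l]; split.
  move=> b; rewrite -(proj2 p) => /imfsetP [a aI ->]; rewrite count_map -(g a aI).
  apply: eq_count => B /=; apply/imfsetP/idP => [[a' a'IB]|aB].
    move: a'IB; rewrite inE => /andP [a'I a'B] /(inj _ _ aI a'I) ->; exact: a'B.
  by exists a; rewrite // inE aI.
rewrite -(relE_mk p) (rel_big (esym e)) /mu ?big_map; last exact: inj.
apply: eq_bigr => B _ /=.
by rewrite rel_res // (relE_mk p).
Qed.


Lemma sub_bigU (C : fs) l : C \in l -> C `<=` Defs.bigU l.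
Proof.
elim: l => [|B l IH] //=; rewrite inE => /orP [/eqP ->|Cl]; first exact: fsubsetUl.
exact: fsubset_trans (IH Cl) (fsubsetUr _ _).
Qed.

Lemma mu_reas l (pl : is_setpart l) (x : H (Defs.bigU l)) : Some (mk (reas pl x)) = mu l (mk x).
Proof.
elim: l pl x => [|B l IH] pl x /=.
  by rewrite /mu big_nil mk0.
set d := setpart_disj pl.
rewrite /mu big_cons -/(mu l (mk x)) (res_hd1 d x).
have -> : mu l (mk x) = mu l (mk (hd d x).2).
  apply: eq_big_seq => C Cl; rewrite -(res_hd2 d x) res_res; congr Some; apply: res_eq => /=.
  by apply/fsetP => a; move: (fsubsetP (sub_bigU Cl) a); fsol.
by rewrite -(IH (setpart_tail pl)) /= mulE_d.
Qed.

Lemma setpart_good l : is_setpart l -> good (Defs.bigU l) l.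
Proof.
elim: l => [|B l IH] //= /and3P [_ d pl] a; rewrite inE => /orP [aB|aU].
  have aU : a \notin Defs.bigU l by apply: (fdisjointP d).
  by rewrite /= aB; move: aU; rewrite mem_bigU has_count -eqn0Ngt => /eqP ->.
have nB : (a \in B) = false by apply/negP => aB; move: (fdisjointP d a aB); rewrite aU.
by rewrite /= nB IH.
Qed.

Lemma count_setpart s : (forall X, X \in s -> X != fset0) ->
  (forall a, count (fun B : fs => a \in B) s <= 1) -> is_setpart s.
Proof.
elim: s => [|B s IH] //= ne c; apply/and3P; split.
- by apply: ne; rewrite inE eqxx.
- apply/fdisjointP => a aB; move: (c a); rewrite /= aB add1n ltnS leqn0 => /eqP c0.
  by rewrite mem_bigU has_count c0.
- apply: IH => [X Xs|a]; first by apply: ne; rewrite inE Xs orbT.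
  by apply: leq_trans (c a); rewrite leq_addl.
Qed.

Lemma normalize K l u : projT1 u = K -> good K l ->
  exists l', [/\ is_setpart l', Defs.bigU l' = K & mu l' u = mu l u].
Proof.
move=> tu g; pose l' := [seq B <- [seq B `&` K | B <- l] | B != fset0].
have cnt : forall a, count (fun B : fs => a \in B) l' = (a \in K) * count (fun B : fs => a \in B) l.
  move=> a; rewrite count_filter -count_Ir; apply: eq_count => X /=.
  case aX: (a \in X) => //=; apply/eqP => X0; by rewrite X0 inE in aX.
exists l'; split.
- apply: count_setpart => [X|a]; first by rewrite mem_filter => /andP [].
  rewrite cnt; case aK: (a \in K); last by [].
  by rewrite mul1n g.
- apply/fsetP => a; rewrite mem_bigU has_count cnt.
  by case aK: (a \in K) => //=; rewrite g.
- rewrite /mu /l' big_filter big_map big_mkcond; apply: eq_bigr => B _.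
  case: ifP => [_|/negbFE/eqP B0].
    by congr Some; apply: res_eq; rewrite tu; apply/fsetP => a; fsol.
  congr Some; rewrite res_dis //; apply/fdisjointP => a; rewrite tu => aK.
  apply/negP => aB; have : a \in B `&` K by rewrite inE aB aK.
  by rewrite B0 inE.
Qed.

Lemma reas_R K (x y : H K) : reassembly H K x y <-> R K x y.
Proof.
split.
  move=> [l [pl [e ->]]]; subst K; exists l; split; first exact: setpart_good.
  exact: mu_reas.
move=> [l [g e]].
have [l' [pl' eU emu]] := @normalize K l (mk x) erefl g.
exists l', pl', eU; subst K; apply: mk_inj.
have : Some (mk y) = Some (mk (reas pl' x)) by rewrite e -emu mu_reas.
by case.
Qed.

End Main.

Theorem mainTheorem8 (H : set_hopf_monoid) :
  commutative_hm H -> cocommutative_hm H ->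
  is_poset_hopf H (reassembly H) /\ self_adjoint H (reassembly H).
Proof.
move=> Hc Hcc.
have RR := @reas_R H Hc Hcc.
split; [split|].
- move=> I; split; [|split].
  + by move=> x; apply/RR; apply: R_refl.
  + by move=> x y /RR h1 /RR h2; apply: R_anti h1 h2.
  + by move=> x y z /RR h1 /RR h2; apply/RR; apply: R_trans h1 h2.
- by move=> I J f p x y /RR h; apply/RR; apply: R_rel.
- by move=> S T d x x' y y' /RR h1 /RR h2; apply/RR; apply: R_hm.
- move=> S T d x x' /RR h; have [h1 h2] := R_hd Hcc d h.
  by split; apply/RR.
- move=> S T d x y z; rewrite RR RR RR.
  exact: R_adj.
Qed.
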